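(* Assume Case (III) holds with $\mathrm{rank}(\mathbf H)=m$, and let $\mathbf y^\star=(\mathbf H^T\mathbf H)^{-1}\mathbf H^T\mathbf z$ be the unique least squares solution, i.e. the unique minimizer of $\|\mathbf z-\mathbf H\mathbf y\|^2$. Suppose $\mathrm G_{\sigma(t)}\equiv\mathrm G^S=(\mathrm V,\mathrm E^S)$ for a fixed bidirectional connected graph $\mathrm G^S$, and $a_{ij}(t)=a_{ji}(t)\equiv a_{ij}^S>0$ are constants. Then for every $\epsilon>0$ there exists $K_\ast(\epsilon)>0$ such that whenever $K\ge K_\ast(\epsilon)$, for every initial value $\mathbf x(0)$ the limit $\mathbf x(\infty)=\lim_{t\to\infty}\mathbf x(t)$ along the ''consensus + projection'' flow exists and $\|\mathbf x_i(\infty)-\mathbf y^\star\|\le\epsilon$ for all $i\in\mathrm V$.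
   Context: Setting: $N,m\ge 1$; $\mathbf H\in\mathbb R^{N\times m}$ has rows $\mathbf h_1^{T},\dots,\mathbf h_N^{T}$ with $\|\mathbf h_i\|=1$ for all $i$; $\mathbf z=(z_1,\dots,z_N)^T\in\mathbb R^N$. Let $\mathcal A_i=\{\mathbf y\in\mathbb R^m:\mathbf h_i^T\mathbf y=z_i\}$ and $\mathcal P_{\mathcal A_i}(\mathbf y)=(I-\mathbf h_i\mathbf h_i^T)\mathbf y+z_i\mathbf h_i$ the Euclidean projection onto $\mathcal A_i$. Case (III): $\mathbf z$ is not in the column space of $\mathbf H$. Network: $\mathrm V=\{1,\dots,N\}$; for a graph with arc set $\mathrm E$, $\mathrm N_i=\{j:(j,i)\in\mathrm E\}$; a graph is bidirectional if $(i,j)\in\mathrm E\iff(j,i)\in\mathrm E$, and connected if moreover strongly connected. The ''consensus + projection'' flow with gain $K>0$ on this fixed graph is $\dot{\mathbf x}_i=K\sum_{j\in\mathrm N_i}a_{ij}^S(\mathbf x_j-\mathbf x_i)+\mathcal P_{\mathcal A_i}(\mathbf x_i)-\mathbf x_i$, $i\in\mathrm V$, with $\mathbf x_i(t)\in\mathbb R^m$, $\mathbf x=(\mathbf x_1,\dots,\mathbf x_N)$. *)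

(* Defs.v *)
From Stdlib Require Export Reals Lra.
Open Scope R_scope.

Fixpoint fsum (n : nat) (f : nat -> R) : R :=
  match n with O => 0 | S n' => fsum n' f + f n' end.

(* vectors of R^m are represented as  nat -> R  (components 0..m-1 used) *)
Definition dot (m : nat) (u v : nat -> R) : R := fsum m (fun k => u k * v k).
Definition vnorm (m : nat) (u : nat -> R) : R := sqrt (dot m u u).

(* (H y)_i = h_i^T y, where H i k is the (i,k) entry, i < N, k < m *)
Definition Hmul (m : nat) (H : nat -> nat -> R) (y : nat -> R) (i : nat) : R :=
  dot m (H i) y.

Definition resid2 (N m : nat) (H : nat -> nat -> R) (z y : nat -> R) : R :=
  fsum N (fun i => (z i - Hmul m H y i) ^ 2).

(* rank H = m : the columns of H are linearly independent *)
Definition full_col_rank (N m : nat) (H : nat -> nat -> R) : Prop :=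
  forall y : nat -> R,
    (forall i, (i < N)%nat -> Hmul m H y i = 0) -> forall k, (k < m)%nat -> y k = 0.

Definition in_col_space (N m : nat) (H : nat -> nat -> R) (z : nat -> R) : Prop :=
  exists y : nat -> R, forall i, (i < N)%nat -> Hmul m H y i = z i.

(* Euclidean projection onto A_i = {y | h_i^T y = z_i}:
   P_{A_i}(y) = (I - h_i h_i^T) y + z_i h_i *)
Definition projA (m : nat) (H : nat -> nat -> R) (z : nat -> R) (i : nat)
  (y : nat -> R) : nat -> R :=
  fun k => y k - H i k * dot m (H i) y + z i * H i k.

(* directed reachability in the graph with arc set E (E j i = arc (j,i)) on V={0..N-1} *)
Inductive reach (N : nat) (E : nat -> nat -> bool) : nat -> nat -> Prop :=
| reach_refl : forall i, (i < N)%nat -> reach N E i i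
| reach_step : forall i j k, reach N E i j -> (k < N)%nat -> E j k = true -> reach N E i k.

Definition bidirectional (N : nat) (E : nat -> nat -> bool) : Prop :=
  forall i j, (i < N)%nat -> (j < N)%nat -> E i j = E j i.

Definition strongly_connected (N : nat) (E : nat -> nat -> bool) : Prop :=
  forall i j, (i < N)%nat -> (j < N)%nat -> reach N E i j.

Definition flow_rhs (N m : nat) (H : nat -> nat -> R) (z : nat -> R)
  (E : nat -> nat -> bool) (a : nat -> nat -> R) (K : R)
  (x : nat -> nat -> R) (i k : nat) : R :=
  K * fsum N (fun j => if E j i then a i j * (x j k - x i k) else 0)
  + (projA m H z i (x i) k - x i k).

(* x : time -> agent -> component is a solution of the flow on [0, +oo) *)
Definition is_flow_solution (N m : nat) (H : nat -> nat -> R) (z : nat -> R)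
  (E : nat -> nat -> bool) (a : nat -> nat -> R) (K : R)
  (x : R -> nat -> nat -> R) : Prop :=
  (forall i k, (i < N)%nat -> (k < m)%nat ->
     forall t, 0 < t ->
       derivable_pt_lim (fun s => x s i k) t (flow_rhs N m H z E a K (x t) i k))
  /\
  (forall i k, (i < N)%nat -> (k < m)%nat ->
     forall e, 0 < e -> exists d, 0 < d /\
       forall t, 0 <= t < d -> Rabs (x t i k - x 0 i k) < e).

Definition lim_at_infty (f : R -> R) (l : R) : Prop :=
  forall e, 0 < e -> exists T, forall t, T <= t -> Rabs (f t - l) < e.

(* Main.v *)
Require Import Defs.
From Stdlib Require Import Reals.
Open Scope R_scope.
From Stdlib Require Import Lra Lia FunctionalExtensionality ClassicalEpsilon.


Lemma sqnn x : 0 <= x * x.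
Proof. apply Rle_0_sqr. Qed.

Lemma fsum_ext n f g : (forall i, (i < n)%nat -> f i = g i) -> fsum n f = fsum n g.
Proof. induction n; simpl; intros; [reflexivity|]. rewrite IHn by (intros; apply H; lia). rewrite H by lia. reflexivity. Qed.

Lemma fsum_plus n f g : fsum n (fun i => f i + g i) = fsum n f + fsum n g.
Proof. induction n; simpl; [lra|]. rewrite IHn. ring. Qed.

Lemma fsum_minus n f g : fsum n (fun i => f i - g i) = fsum n f - fsum n g.
Proof. induction n; simpl; [lra|]. rewrite IHn. ring. Qed.

Lemma fsum_scal n c f : fsum n (fun i => c * f i) = c * fsum n f.
Proof. induction n; simpl; [lra|]. rewrite IHn. ring. Qed.

Lemma fsum_zero n : fsum n (fun _ => 0) = 0.
Proof. induction n; simpl; [lra|]. rewrite IHn. ring. Qed.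

Lemma fsum_const n c : fsum n (fun _ => c) = INR n * c.
Proof. induction n; simpl fsum; [simpl; lra|]. rewrite IHn, S_INR. ring. Qed.

Lemma fsum_le n f g : (forall i, (i < n)%nat -> f i <= g i) -> fsum n f <= fsum n g.
Proof. induction n; simpl; intros; [lra|]. assert (f n <= g n) by (apply H; lia).
assert (fsum n f <= fsum n g) by (apply IHn; intros; apply H; lia). lra. Qed.

Lemma fsum_nonneg n f : (forall i, (i < n)%nat -> 0 <= f i) -> 0 <= fsum n f.
Proof. intros. rewrite <- (fsum_zero n). apply fsum_le. auto. Qed.

Lemma fsum_single n f j : (forall i, (i < n)%nat -> 0 <= f i) -> (j < n)%nat -> f j <= fsum n f.
Proof. induction n; simpl; intros; [lia|].
assert (0 <= fsum n f) by (apply fsum_nonneg; intros; apply H; lia).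
destruct (Nat.eq_dec j n). subst. lra.
assert (f j <= fsum n f) by (apply IHn; [intros; apply H; lia| lia]).
assert (0 <= f n) by (apply H; lia). lra. Qed.

Lemma fsum_swap n p (f : nat -> nat -> R) :
  fsum n (fun i => fsum p (fun k => f i k)) = fsum p (fun k => fsum n (fun i => f i k)).
Proof. induction n; simpl. rewrite fsum_zero; reflexivity.
rewrite IHn, <- fsum_plus. reflexivity. Qed.

Lemma quad_disc A B C : 0 <= C -> (forall t, 0 <= A - 2*t*B + t*t*C) -> B*B <= A*C.
Proof. intros HC Ht. destruct (Rle_lt_or_eq_dec 0 C HC) as [Cp|C0].
- specialize (Ht (B/C)). 
  assert (E: A - 2 * (B / C) * B + B / C * (B / C) * C = (A*C - B*B)/C) by (field; lra).
  rewrite E in Ht. apply Rmult_le_compat_r with (r:=C) in Ht; [|lra].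
  unfold Rdiv in Ht. rewrite Rmult_assoc, Rinv_l, Rmult_1_r, Rmult_0_l in Ht by lra. lra.
- subst C. destruct (Req_dec B 0). subst; nra.
  specialize (Ht ((A+1)/(2*B))).
  assert (E: A - 2 * ((A + 1) / (2 * B)) * B + (A + 1) / (2 * B) * ((A + 1) / (2 * B)) * 0 = -1) by (field; lra).
  lra. Qed.

Lemma dot_CS m u v : dot m u v * dot m u v <= dot m u u * dot m v v.
Proof. apply quad_disc. apply fsum_nonneg; intros; apply sqnn.
intros t. assert (E: dot m u u - 2 * t * dot m u v + t * t * dot m v v =
  fsum m (fun k => (u k - t * v k) * (u k - t * v k))).
{ unfold dot. rewrite <- !fsum_scal, <- fsum_minus, <- fsum_plus. apply fsum_ext; intros; ring. }
rewrite E. apply fsum_nonneg; intros; apply sqnn. Qed.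

Lemma dot_nonneg m u : 0 <= dot m u u.
Proof. apply fsum_nonneg; intros; apply sqnn. Qed.

Lemma dplus f g t a b : derivable_pt_lim f t a -> derivable_pt_lim g t b ->
  derivable_pt_lim (fun s => f s + g s) t (a + b).
Proof. apply derivable_pt_lim_plus. Qed.
Lemma dminus f g t a b : derivable_pt_lim f t a -> derivable_pt_lim g t b ->
  derivable_pt_lim (fun s => f s - g s) t (a - b).
Proof. apply derivable_pt_lim_minus. Qed.
Lemma dmult f g t a b : derivable_pt_lim f t a -> derivable_pt_lim g t b ->
  derivable_pt_lim (fun s => f s * g s) t (a * g t + f t * b).
Proof. apply derivable_pt_lim_mult. Qed.
Lemma dconst c t : derivable_pt_lim (fun _ => c) t 0.
Proof. apply derivable_pt_lim_const. Qed.
Lemma dscal c f t a : derivable_pt_lim f t a -> derivable_pt_lim (fun s => c * f s) t (c * a).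
Proof. apply derivable_pt_lim_scal. Qed.
Lemma dfsum n (f : nat -> R -> R) d t : (forall j, (j < n)%nat -> derivable_pt_lim (f j) t (d j)) ->
  derivable_pt_lim (fun s => fsum n (fun j => f j s)) t (fsum n d).
Proof. induction n; simpl; intros. apply dconst. apply dplus. apply IHn; intros; apply H; lia. apply H; lia. Qed.
Lemma dext f g t a : (forall s, f s = g s) -> derivable_pt_lim f t a -> derivable_pt_lim g t a.
Proof. intros E Hd. replace g with f; [exact Hd|]. apply functional_extensionality; auto. Qed.


Lemma Rdiv_le_0_compat a b : 0 <= a -> 0 < b -> 0 <= a / b.
Proof. intros. unfold Rdiv. apply Rmult_le_pos; auto. left; apply Rinv_0_lt_compat; auto. Qed.

Lemma lim_ext f g l : (forall t, f t = g t) -> lim_at_infty f l -> lim_at_infty g l.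
Proof. intros E H e He. destruct (H e He) as [T HT]. exists T; intros. rewrite <- E; auto. Qed.

Lemma lim_const c : lim_at_infty (fun _ => c) c.
Proof. intros e He. exists 0. intros. unfold Rminus. rewrite Rplus_opp_r, Rabs_R0. lra. Qed.

Lemma lim_plus f g a b : lim_at_infty f a -> lim_at_infty g b -> lim_at_infty (fun t => f t + g t) (a + b).
Proof. intros Hf Hg e He. destruct (Hf (e/2)) as [T1 H1]; [lra|]. destruct (Hg (e/2)) as [T2 H2]; [lra|].
exists (Rmax T1 T2). intros t Ht. specialize (H1 t (Rle_trans _ _ _ (Rmax_l _ _) Ht)).
specialize (H2 t (Rle_trans _ _ _ (Rmax_r _ _) Ht)).
replace (f t + g t - (a + b)) with ((f t - a) + (g t - b)) by ring.
eapply Rle_lt_trans. apply Rabs_triang. lra. Qed.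

Lemma lim_scal c f a : lim_at_infty f a -> lim_at_infty (fun t => c * f t) (c * a).
Proof. intros Hf e He. destruct (Hf (e/(Rabs c + 1))) as [T H1].
{ apply Rdiv_lt_0_compat; [lra|]. pose proof (Rabs_pos c); lra. }
exists T. intros t Ht. specialize (H1 t Ht).
replace (c * f t - c * a) with (c * (f t - a)) by ring. rewrite Rabs_mult.
pose proof (Rabs_pos c). pose proof (Rabs_pos (f t - a)).
assert (Rabs (f t - a) * (Rabs c + 1) < e).
{ apply Rmult_lt_compat_r with (r := Rabs c + 1) in H1; [|lra].
  unfold Rdiv in H1. rewrite Rmult_assoc, Rinv_l, Rmult_1_r in H1 by lra. exact H1. }
nra. Qed.

Lemma lim_minus f g a b : lim_at_infty f a -> lim_at_infty g b -> lim_at_infty (fun t => f t - g t) (a - b).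
Proof. intros Hf Hg. apply (lim_ext (fun t => f t + (-1) * g t)). intros; ring.
replace (a - b) with (a + (-1) * b) by ring. apply lim_plus; auto. apply lim_scal; auto. Qed.

Lemma lim_fsum n (f : nat -> R -> R) l : (forall j, (j < n)%nat -> lim_at_infty (f j) (l j)) ->
  lim_at_infty (fun t => fsum n (fun j => f j t)) (fsum n l).
Proof. induction n; simpl; intros. apply lim_const. apply lim_plus. apply IHn; intros; apply H; lia. apply H; lia. Qed.

Lemma lim_unique f a b : lim_at_infty f a -> lim_at_infty f b -> a = b.
Proof. intros Ha Hb. destruct (Req_dec a b); auto. exfalso.
assert (0 < Rabs (a - b) / 2). { apply Rdiv_lt_0_compat; [|lra]. apply Rabs_pos_lt. lra. }
destruct (Ha _ H0) as [T1 H1]. destruct (Hb _ H0) as [T2 H2].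
specialize (H1 (Rmax T1 T2) (Rmax_l _ _)). specialize (H2 (Rmax T1 T2) (Rmax_r _ _)).
pose proof (Rabs_triang (a - f (Rmax T1 T2)) (f (Rmax T1 T2) - b)).
replace (a - f (Rmax T1 T2) + (f (Rmax T1 T2) - b)) with (a - b) in H3 by ring.
rewrite Rabs_minus_sym in H1. lra. Qed.

Lemma exp_small lam C e : 0 < lam -> 0 <= C -> 0 < e ->
  exists T, 1 <= T /\ forall t, T <= t -> C * exp (- lam * t) < e.
Proof. intros Hl HC He. exists (1 + C / (lam * e)). split.
{ assert (0 <= C/(lam*e)) by (apply Rdiv_le_0_compat; nra). lra. }
intros t Ht. assert (0 <= C/(lam*e)) by (apply Rdiv_le_0_compat; nra).
assert (Hlt : lam * t > 0) by nra.
pose proof (exp_ineq1 (lam * t) ltac:(lra)).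
replace (- lam * t) with (- (lam * t)) by ring. rewrite exp_Ropp.
assert (Hex : 0 < exp (lam * t)) by apply exp_pos.
apply Rmult_lt_reg_r with (r := exp (lam * t)); auto.
rewrite Rmult_assoc, Rinv_l, Rmult_1_r by lra.
assert (C <= lam * e * (C / (lam * e))) by (right; field; nra).
assert (lam * e * (C / (lam*e)) < e * (lam * t)).
{ assert (C / (lam*e) < t) by lra. nra. }
nra. Qed.

Lemma dexpn lam t : derivable_pt_lim (fun s => exp (- lam * s)) t (- lam * exp (- lam * t)).
Proof. pose proof (derivable_pt_lim_comp (fun s => - lam * s) exp t (- lam * 1) (exp (-lam * t))).
assert (derivable_pt_lim (fun s => - lam * s) t (- lam * 1)).
{ apply dscal. apply derivable_pt_lim_id. }
specialize (H H0 (derivable_pt_lim_exp _)). unfold comp in H.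
replace (- lam * exp (- lam * t)) with (exp (- lam * t) * (- lam * 1)) by ring. exact H. Qed.

Lemma conv_deriv f f' C lam : 0 < lam -> 0 <= C ->
  (forall s, 1 <= s -> derivable_pt_lim f s (f' s)) ->
  (forall s, 1 <= s -> Rabs (f' s) <= C * exp (- lam * s)) ->
  exists L, lim_at_infty f L.
Proof.
intros Hl HC Hd Hb.
set (c := fun s => C / lam * exp (- lam * s)).
assert (cnn : forall s, 0 <= c s). { intros; unfold c. apply Rmult_le_pos. apply Rdiv_le_0_compat; lra. left; apply exp_pos. }
set (u := fun s => f s + c s). set (v := fun s => f s - c s).
assert (umon : forall a b, 1 <= a -> a <= b -> u b <= u a).
{ intros a b Ha Hab. destruct (Req_dec a b). subst; lra.
  destruct (MVT_cor2 u (fun s => f' s - C * exp (- lam * s)) a b) as [x [Hx1 Hx2]]. lra.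
  intros x Hx. unfold u. replace (f' x - C * exp (- lam * x)) with (f' x + (C / lam * (- lam * exp (- lam * x)))) by (field; lra).
  apply dplus. apply Hd; lra. unfold c. apply dscal, dexpn.
  specialize (Hb x ltac:(lra)). assert (f' x <= C * exp (- lam * x)) by (pose proof (Rle_abs (f' x)); lra).
  assert ((f' x - C * exp (- lam * x)) * (b - a) <= 0). { assert (f' x - C * exp (- lam * x) <= 0) by lra. assert (0 < b - a) by lra. nra. } lra. }
assert (vmon : forall a b, 1 <= a -> a <= b -> v a <= v b).
{ intros a b Ha Hab. destruct (Req_dec a b). subst; lra.
  destruct (MVT_cor2 v (fun s => f' s + C * exp (- lam * s)) a b) as [x [Hx1 Hx2]]. lra.
  intros x Hx. unfold v. replace (f' x + C * exp (- lam * x)) with (f' x - (C / lam * (- lam * exp (- lam * x)))) by (field; lra).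
  apply dminus. apply Hd; lra. unfold c. apply dscal, dexpn.
  specialize (Hb x ltac:(lra)). assert (- C * exp (- lam * x) <= f' x) by (pose proof (Rle_abs (- f' x)); rewrite Rabs_Ropp in *; lra).
  assert (0 <= (f' x + C * exp (- lam * x)) * (b - a)) by (apply Rmult_le_pos; lra). lra. }
assert (vu : forall s, v s <= u s). { intros; unfold u, v; pose proof (cnn s); lra. }
set (Es := fun y => exists s, 1 <= s /\ y = v s).
assert (ub : forall t, 1 <= t -> is_upper_bound Es (u t)).
{ intros t Ht y [s [Hs ->]]. destruct (Rle_dec s t).
  - pose proof (vmon s t Hs r). pose proof (vu t). lra.
  - pose proof (umon t s Ht ltac:(lra)). pose proof (vu s). lra. }
destruct (completeness Es) as [L [HL1 HL2]].
{ exists (u 1). apply ub; lra. }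
{ exists (v 1). exists 1. split; [lra|reflexivity]. }
exists L. intros e He.
destruct (exp_small lam (C / lam) e) as [T [HT1 HT2]]; auto. apply Rdiv_le_0_compat; lra.
exists T. intros t Ht.
assert (v t <= L) by (apply HL1; exists t; split; [lra|reflexivity]).
assert (L <= u t) by (apply HL2, ub; lra).
specialize (HT2 t Ht). fold (c t) in HT2. unfold u, v in *.
apply Rabs_def1; lra.
Qed.

Lemma lim_from_bound f C lam : 0 < lam -> 0 <= C ->
  (forall s, 1 <= s -> Rabs (f s) <= C * exp (- lam * s)) -> lim_at_infty f 0.
Proof. intros Hl HC Hb e He. destruct (exp_small lam C e Hl HC He) as [T [HT1 HT2]].
exists T. intros t Ht. rewrite Rminus_0_r. specialize (Hb t ltac:(lra)). specialize (HT2 t Ht). lra. Qed.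


Definition W (E : nat -> nat -> bool) (a : nat -> nat -> R) i j : R := if E j i then a i j else 0.
Definition Lin N m (H : nat -> nat -> R) E a K (x : nat -> nat -> R) i k :=
  K * fsum N (fun j => W E a i j * (x j k - x i k)) - H i k * dot m (H i) (x i).
Definition inner N m (e f : nat -> nat -> R) := fsum N (fun i => dot m (e i) (f i)).
Definition Sq N E a (u : nat -> R) := fsum N (fun i => fsum N (fun j => W E a i j * ((u i - u j) * (u i - u j)))).
Definition Lap N m E a (e : nat -> nat -> R) := fsum m (fun k => Sq N E a (fun i => e i k)).
Definition HQ N m (H : nat -> nat -> R) (e : nat -> nat -> R) := fsum N (fun i => dot m (H i) (e i) * dot m (H i) (e i)).
Definition Dv N m (e : nat -> nat -> R) := fsum N (fun i => dot m (fun k => e i k - e 0%nat k) (fun k => e i k - e 0%nat k)).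

Lemma rhs_eq N m H z E a K x i k :
  flow_rhs N m H z E a K x i k = Lin N m H E a K x i k + z i * H i k.
Proof. unfold flow_rhs, Lin, projA, W.
replace (fsum N (fun j => if E j i then a i j * (x j k - x i k) else 0)) with
  (fsum N (fun j => (if E j i then a i j else 0) * (x j k - x i k))).
ring. apply fsum_ext; intros j ?; destruct (E j i); ring. Qed.

Lemma lapl_id N E a u : (forall i j, (i < N)%nat -> (j < N)%nat -> W E a i j = W E a j i) ->
  fsum N (fun i => fsum N (fun j => W E a i j * (u i * (u j - u i)))) = -(1/2) * Sq N E a u.
Proof. intros Ws.
set (T1 := fsum N (fun i => fsum N (fun j => W E a i j * (u i * u j)))).
set (T2 := fsum N (fun i => fsum N (fun j => W E a i j * (u i * u i)))).
set (T3 := fsum N (fun i => fsum N (fun j => W E a i j * (u j * u j)))).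
assert (E1 : fsum N (fun i => fsum N (fun j => W E a i j * (u i * (u j - u i)))) = T1 - T2).
{ unfold T1, T2. rewrite <- fsum_minus. apply fsum_ext; intros. rewrite <- fsum_minus. apply fsum_ext; intros. ring. }
assert (E2 : Sq N E a u = T2 - 2 * T1 + T3).
{ unfold Sq, T1, T2, T3. rewrite <- fsum_scal, <- fsum_minus, <- fsum_plus. apply fsum_ext; intros.
  rewrite <- fsum_scal, <- fsum_minus, <- fsum_plus. apply fsum_ext; intros. ring. }
assert (E3 : T3 = T2).
{ unfold T3, T2. rewrite fsum_swap. apply fsum_ext; intros. apply fsum_ext; intros. rewrite Ws; auto. }
rewrite E1, E2, E3. field. Qed.

Lemma dot_plus m u v w : dot m u (fun k => v k + w k) = dot m u v + dot m u w.
Proof. unfold dot. rewrite <- fsum_plus. apply fsum_ext; intros; ring. Qed.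
Lemma dot_minus m u v w : dot m u (fun k => v k - w k) = dot m u v - dot m u w.
Proof. unfold dot. rewrite <- fsum_minus. apply fsum_ext; intros; ring. Qed.
Lemma dot_sym m u v : dot m u v = dot m v u.
Proof. unfold dot. apply fsum_ext; intros; ring. Qed.

Lemma inner_Lin N m H E a K e : (forall i j, (i < N)%nat -> (j < N)%nat -> W E a i j = W E a j i) ->
  inner N m e (Lin N m H E a K e) = -(K/2) * Lap N m E a e - HQ N m H e.
Proof. intros Ws. unfold inner, Lin, HQ, Lap.
transitivity (K * fsum N (fun i => fsum m (fun k => fsum N (fun j => W E a i j * (e i k * (e j k - e i k)))))
   - fsum N (fun i => dot m (H i) (e i) * dot m (H i) (e i))).
{ rewrite <- fsum_scal, <- fsum_minus. apply fsum_ext; intros i Hi.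
  rewrite dot_minus. f_equal.
  - unfold dot at 1. rewrite <- fsum_scal. apply fsum_ext; intros k Hk.
    replace (e i k * (K * fsum N (fun j => W E a i j * (e j k - e i k)))) with
      (K * (e i k * fsum N (fun j => W E a i j * (e j k - e i k)))) by ring.
    f_equal. rewrite <- fsum_scal. apply fsum_ext; intros; ring.
  - unfold dot at 1. rewrite (fsum_ext _ _ (fun k => dot m (H i) (e i) * (H i k * e i k))).
    rewrite fsum_scal. reflexivity. intros; ring. }
rewrite fsum_swap.
rewrite (fsum_ext m _ (fun k => -(1/2) * Sq N E a (fun i => e i k))).
rewrite fsum_scal. field.
intros. apply lapl_id; auto. Qed.


Lemma reach_lt N E i j : reach N E i j -> (j < N)%nat.
Proof. induction 1; auto. Qed.

Lemma Sq_nonneg N E a u : (forall i j, (i < N)%nat -> (j < N)%nat -> 0 <= W E a i j) -> 0 <= Sq N E a u.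
Proof. intros. apply fsum_nonneg; intros. apply fsum_nonneg; intros. apply Rmult_le_pos; auto. apply sqnn. Qed.

Lemma Lap_nonneg N m E a e : (forall i j, (i < N)%nat -> (j < N)%nat -> 0 <= W E a i j) -> 0 <= Lap N m E a e.
Proof. intros. apply fsum_nonneg; intros. apply Sq_nonneg; auto. Qed.

Lemma reach_bound N E a
  (Wnn : forall i j, (i < N)%nat -> (j < N)%nat -> 0 <= W E a i j)
  (Wpos : forall j k, (j < N)%nat -> (k < N)%nat -> E j k = true -> 0 < W E a k j) i j :
  reach N E i j -> exists C, 0 <= C /\ forall u, (u j - u i) * (u j - u i) <= C * Sq N E a u.
Proof. induction 1.
- exists 0. split; [lra|]. intros. replace (u i - u i) with 0 by ring. pose proof (Sq_nonneg N E a u Wnn). lra.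
- destruct IHreach as [C [HC HCu]]. pose proof (reach_lt _ _ _ _ H) as Hj.
  pose proof (Wpos j k Hj H0 H1) as Wp.
  exists (2 * C + 2 / W E a k j). split. { assert (0 < 2 / W E a k j) by (apply Rdiv_lt_0_compat; lra). lra. }
  intros u. specialize (HCu u). pose proof (Sq_nonneg N E a u Wnn) as Sn.
  assert (Hterm : W E a k j * ((u k - u j) * (u k - u j)) <= Sq N E a u).
  { unfold Sq. eapply Rle_trans; [|apply (fsum_single N _ k)].
    - apply (fsum_single N (fun j0 => W E a k j0 * ((u k - u j0) * (u k - u j0))) j); auto.
      intros; apply Rmult_le_pos; [apply Wnn; auto| apply sqnn].
    - intros; apply fsum_nonneg; intros; apply Rmult_le_pos; [apply Wnn; auto| apply sqnn].
    - auto. }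
  assert (Hd : (u k - u j) * (u k - u j) <= / W E a k j * Sq N E a u).
  { apply Rmult_le_reg_l with (r := W E a k j); auto. replace (W E a k j * (/ W E a k j * Sq N E a u)) with (Sq N E a u) by (field; lra). exact Hterm. }
  assert ((u k - u i) * (u k - u i) <= 2 * ((u k - u j) * (u k - u j)) + 2 * ((u j - u i) * (u j - u i))).
  { pose proof (sqnn ((u k - u j) - (u j - u i))). nra. }
  unfold Rdiv. nra.
Qed.

Lemma fin_choice n (P : nat -> R -> Prop) :
  (forall i C C', P i C -> C <= C' -> P i C') ->
  (forall i, (i < n)%nat -> exists C, 0 <= C /\ P i C) ->
  exists C, 0 <= C /\ forall i, (i < n)%nat -> P i C.
Proof. intros Hm. induction n; intros Hex.
- exists 0. split; [lra|]. intros; lia.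
- destruct IHn as [C1 [HC1 HP1]]. intros; apply Hex; lia.
  destruct (Hex n ltac:(lia)) as [C2 [HC2 HP2]].
  exists (C1 + C2). split; [lra|]. intros i Hi. destruct (Nat.eq_dec i n).
  + subst. apply (Hm n C2); auto; lra.
  + apply (Hm i C1); [apply HP1; lia| lra]. Qed.

Lemma D_le_Lap N m E a
  (Wnn : forall i j, (i < N)%nat -> (j < N)%nat -> 0 <= W E a i j)
  (Wpos : forall j k, (j < N)%nat -> (k < N)%nat -> E j k = true -> 0 < W E a k j)
  (Hc : forall i, (i < N)%nat -> reach N E 0 i) :
  exists Cd, 0 < Cd /\ forall e, Dv N m e <= Cd * Lap N m E a e.
Proof.
destruct (fin_choice N (fun i C => forall u, (u i - u 0%nat) * (u i - u 0%nat) <= C * Sq N E a u)) as [C [HC HP]].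
{ intros i C C' HCu Hle u. specialize (HCu u). pose proof (Sq_nonneg N E a u Wnn). nra. }
{ intros i Hi. apply reach_bound; auto. }
exists (INR N * C + 1). split. { pose proof (pos_INR N). nra. }
intros e. unfold Dv, dot. rewrite fsum_swap.
apply Rle_trans with (INR N * C * Lap N m E a e).
- unfold Lap. rewrite <- fsum_scal. apply fsum_le; intros k Hk.
  apply Rle_trans with (fsum N (fun _ => C * Sq N E a (fun i => e i k))).
  + apply fsum_le; intros i Hi. apply (HP i Hi (fun i0 => e i0 k)).
  + rewrite fsum_const. lra.
- pose proof (Lap_nonneg N m E a e Wnn). nra.
Qed.


Lemma dot_split m h (e : nat -> nat -> R) i :
  dot m h (e i) = dot m h (e 0%nat) + dot m h (fun k => e i k - e 0%nat k).
Proof. unfold dot. rewrite <- fsum_plus. apply fsum_ext; intros; ring. Qed.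

Lemma HQ_lower N m H e (hn : forall i, (i < N)%nat -> dot m (H i) (H i) = 1) :
  (1/2) * fsum N (fun i => dot m (H i) (e 0%nat) * dot m (H i) (e 0%nat)) - Dv N m e <= HQ N m H e.
Proof. unfold HQ, Dv. rewrite <- fsum_scal, <- fsum_minus. apply fsum_le; intros i Hi.
rewrite (dot_split m (H i) e i).
set (A := dot m (H i) (e 0%nat)). set (d := fun k => e i k - e 0%nat k).
pose proof (dot_CS m (H i) d). rewrite hn in H0 by auto.
pose proof (sqnn (A + 2 * dot m (H i) d)). nra. Qed.

Lemma fsum_delta n k (y : nat -> R) :
  fsum n (fun j => (if Nat.eqb k j then 1 else 0) * y j) = if Compare_dec.lt_dec k n then y k else 0.
Proof. induction n; simpl. destruct (Compare_dec.lt_dec k 0); [lia|reflexivity].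
rewrite IHn. destruct (Nat.eqb_spec k n).
- subst. destruct (Compare_dec.lt_dec n n); [lia|]. destruct (Compare_dec.lt_dec n (S n)); [|lia]. ring.
- destruct (Compare_dec.lt_dec k n); destruct (Compare_dec.lt_dec k (S n)); try lia; ring.
Qed.

Lemma coerc N m H G :
  (forall k j, (k < m)%nat -> (j < m)%nat -> fsum N (fun i => G k i * H i j) = if Nat.eqb k j then 1 else 0) ->
  exists beta, 0 < beta /\ beta <= 1 /\ forall y,
    beta * dot m y y <= fsum N (fun i => dot m (H i) y * dot m (H i) y).
Proof. intros HG.
set (SG := fsum m (fun k => dot N (G k) (G k))).
assert (SGnn : 0 <= SG) by (apply fsum_nonneg; intros; apply dot_nonneg).
exists (1 / (SG + 1)). split. apply Rdiv_lt_0_compat; lra. split.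
{ apply Rmult_le_reg_r with (r := SG + 1); [lra|]. unfold Rdiv. rewrite Rmult_assoc, Rinv_l by lra. lra. }
intros y. set (v := fun i => dot m (H i) y). set (Q := fsum N (fun i => dot m (H i) y * dot m (H i) y)).
assert (Qnn : 0 <= Q) by (apply fsum_nonneg; intros; apply sqnn).
assert (yk : forall k, (k < m)%nat -> y k = dot N (G k) v).
{ intros k Hk. unfold dot at 1, v. unfold dot.
  rewrite (fsum_ext N _ (fun i => fsum m (fun j => G k i * H i j * y j))).
  rewrite fsum_swap. rewrite (fsum_ext m _ (fun j => (if Nat.eqb k j then 1 else 0) * y j)).
  rewrite fsum_delta. destruct (Compare_dec.lt_dec k m); [reflexivity|lia].
  - intros j Hj. rewrite <- HG by auto. rewrite Rmult_comm, <- fsum_scal. apply fsum_ext; intros; ring.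
  - intros i Hi. rewrite <- fsum_scal. apply fsum_ext; intros; ring. }
assert (Hy : dot m y y <= SG * Q).
{ unfold SG. rewrite Rmult_comm, <- fsum_scal. unfold dot at 1. apply fsum_le; intros k Hk.
  rewrite yk by auto. pose proof (dot_CS N (G k) v). assert (EQ : Q = dot N v v) by reflexivity. rewrite EQ. lra. }
apply Rle_trans with (1 / (SG + 1) * (SG * Q)).
- apply Rmult_le_compat_l; auto. apply Rdiv_le_0_compat; lra.
- assert (1 / (SG + 1) * (SG * Q) = (SG / (SG + 1)) * Q) by (field; lra). rewrite H0.
  assert (SG / (SG + 1) <= 1).
  { apply Rmult_le_reg_r with (r := SG + 1); [lra|]. unfold Rdiv. rewrite Rmult_assoc, Rinv_l by lra. lra. }
  nra.
Qed.

Lemma Hmul_lin m H y u t i : Hmul m H (fun k => y k + t * u k) i = Hmul m H y i + t * dot m (H i) u.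
Proof. unfold Hmul, dot. rewrite <- fsum_scal, <- fsum_plus. apply fsum_ext; intros; ring. Qed.

Lemma normal_eq N m H z ystar (Hls : forall y, resid2 N m H z ystar <= resid2 N m H z y) u :
  fsum N (fun i => (z i - Hmul m H ystar i) * dot m (H i) u) = 0.
Proof.
set (A := fsum N (fun i => (z i - Hmul m H ystar i) * dot m (H i) u)).
set (B := fsum N (fun i => dot m (H i) u * dot m (H i) u)).
assert (Bnn : 0 <= B) by (apply fsum_nonneg; intros; apply sqnn).
assert (Ht : forall t, 0 <= 0 - 2 * t * A + t * t * B).
{ intros t. specialize (Hls (fun k => ystar k + t * u k)).
  assert (resid2 N m H z (fun k => ystar k + t * u k) = resid2 N m H z ystar - 2 * t * A + t * t * B).
  { unfold resid2, A, B. rewrite <- !fsum_scal, <- fsum_minus, <- fsum_plus. apply fsum_ext; intros.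
    rewrite Hmul_lin. ring. }
  lra. }
pose proof (quad_disc 0 A B Bnn Ht). nra. Qed.

Lemma inner_bound N m e :
  inner N m e e <= 2 * INR N * dot m (e 0%nat) (e 0%nat) + 2 * Dv N m e.
Proof. unfold inner, Dv.
replace (2 * INR N * dot m (e 0%nat) (e 0%nat) + 2 * fsum N (fun i => dot m (fun k => e i k - e 0%nat k) (fun k => e i k - e 0%nat k)))
 with (fsum N (fun i => 2 * dot m (e 0%nat) (e 0%nat) + 2 * dot m (fun k => e i k - e 0%nat k) (fun k => e i k - e 0%nat k)))
 by (rewrite fsum_plus, !fsum_scal, fsum_const; ring).
apply fsum_le; intros i Hi. unfold dot. rewrite <- !fsum_scal, <- fsum_plus. apply fsum_le; intros k Hk.
pose proof (sqnn (e 0%nat k - (e i k - e 0%nat k))). nra. Qed.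


Lemma dexpc c t : derivable_pt_lim (fun s => exp (c * s)) t (c * exp (c * t)).
Proof. pose proof (dexpn (- c) t). replace (- - c) with c in H by ring. exact H. Qed.

Lemma gronwall g g' lam : (forall s, 0 < s -> derivable_pt_lim g s (g' s)) ->
  (forall s, 0 < s -> g' s <= - (2 * lam) * g s) ->
  forall t, 1 <= t -> g t * exp (2 * lam * t) <= g 1 * exp (2 * lam * 1).
Proof. intros Hd Hb t Ht. destruct (Req_dec t 1). subst; lra.
destruct (MVT_cor2 (fun s => g s * exp (2 * lam * s)) (fun s => g' s * exp (2 * lam * s) + g s * (2 * lam * exp (2 * lam * s))) 1 t) as [c [Hc1 Hc2]].
lra. intros c Hc. apply (dmult g (fun s => exp (2 * lam * s))). apply Hd; lra. apply dexpc.
assert (0 < exp (2 * lam * c)) by apply exp_pos. specialize (Hb c ltac:(lra)).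
assert ((g' c * exp (2 * lam * c) + g c * (2 * lam * exp (2 * lam * c))) <= 0).
{ replace (g' c * exp (2 * lam * c) + g c * (2 * lam * exp (2 * lam * c))) with ((g' c + 2 * lam * g c) * exp (2 * lam * c)) by ring.
  assert (g' c + 2 * lam * g c <= 0) by lra. nra. }
assert ((g' c * exp (2 * lam * c) + g c * (2 * lam * exp (2 * lam * c))) * (t - 1) <= 0).
{ assert (0 < t - 1) by lra. nra. }
lra. Qed.

Lemma d_inner N m (y : R -> nat -> nat -> R) Y t :
  (forall i k, (i < N)%nat -> (k < m)%nat -> derivable_pt_lim (fun s => y s i k) t (Y i k)) ->
  derivable_pt_lim (fun s => inner N m (y s) (y s)) t (2 * inner N m (y t) Y).
Proof. intros Hd. unfold inner, dot.
replace (2 * fsum N (fun i => fsum m (fun k => y t i k * Y i k))) with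
  (fsum N (fun i => fsum m (fun k => Y i k * y t i k + y t i k * Y i k))).
- apply dfsum; intros i Hi. apply dfsum; intros k Hk. apply dmult; apply Hd; auto.
- rewrite <- fsum_scal. apply fsum_ext; intros. rewrite <- fsum_scal. apply fsum_ext; intros. ring.
Qed.

Lemma w_deriv N m H z E a K x : is_flow_solution N m H z E a K x ->
  forall i k, (i < N)%nat -> (k < m)%nat -> forall t, 0 < t ->
  derivable_pt_lim (fun s => flow_rhs N m H z E a K (x s) i k) t
    (Lin N m H E a K (fun j l => flow_rhs N m H z E a K (x t) j l) i k).
Proof. intros [Hx _] i k Hi Hk t Ht.
eapply dext. { intros s. symmetry. apply rhs_eq. }
unfold Lin at 1. unfold dot.
replace (Lin N m H E a K (fun j l => flow_rhs N m H z E a K (x t) j l) i k) with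
  (K * fsum N (fun j => W E a i j * (flow_rhs N m H z E a K (x t) j k - flow_rhs N m H z E a K (x t) i k))
   - H i k * fsum m (fun l => H i l * flow_rhs N m H z E a K (x t) i l) + 0) by (unfold Lin, dot; ring).
apply dplus; [|apply dconst]. apply dminus.
- apply dscal. apply dfsum; intros j Hj. apply dscal. apply dminus; apply Hx; auto.
- apply dscal. apply dfsum; intros l Hl. apply dscal. apply Hx; auto.
Qed.

From mathcomp Require all_boot all_algebra Rstruct.

Module MC.
Import all_boot all_algebra Rstruct.
Import GRing.Theory.
Local Open Scope ring_scope.

Lemma fsum_big (n : nat) (f : nat -> R) : fsum n f = \sum_(i < n) f i.
Proof.
elim: n => [|n IH] /=; first by rewrite big_ord0.
by rewrite big_ord_recr /= IH RplusE.
Qed.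

Lemma left_inv_mx (N m : nat) (H : nat -> nat -> R) :
  full_col_rank N.+1 m.+1 H ->
  exists G : 'M[R]_(m.+1, N.+1),
    G *m (\matrix_(i < N.+1, k < m.+1) H i k) = 1%:M.
Proof.
move=> Hr.
set A := \matrix_(i < N.+1, k < m.+1) H i k.
have inj : forall p (v : 'M[R]_(m.+1, p)), A *m v = 0 -> v = 0.
  move=> p v Av; apply/matrixP => k j; rewrite mxE.
  pose y := fun k : nat => v (inord k) j.
  have := Hr y _ k (ltP (ltn_ord k)).
  rewrite /y inord_val; apply.
  move=> i ilt.
  have E := congr1 (fun M : 'M[R]_(N.+1,p) => M (inord i) j) Av.
  rewrite /= !mxE in E.
  rewrite /Hmul /dot fsum_big.
  apply: etrans (_ : _ = \sum_j0 A (inord i) j0 * v j0 j) _; last by rewrite E.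
  apply: eq_bigr => l _; rewrite mxE inordK; last exact/ltP.
  by rewrite RmultE inord_val.
have rf : row_free A^T.
  rewrite -kermx_eq0; apply/eqP.
  have KA : kermx A^T *m A^T = 0 by apply/sub_kermxP.
  have : A *m (kermx A^T)^T = 0.
    by have := congr1 trmx KA; rewrite trmx_mul trmxK trmx0.
  move/inj => /(congr1 trmx); by rewrite trmxK trmx0.
case/row_freeP: rf => B HB.
exists B^T.
by have := congr1 trmx HB; rewrite trmx_mul trmxK trmx1.
Qed.

Lemma left_inv (N m : nat) (H : nat -> nat -> R) :
  full_col_rank N.+1 m.+1 H ->
  exists G : nat -> nat -> R, forall k j, (k < m.+1)%coq_nat -> (j < m.+1)%coq_nat ->
    fsum N.+1 (fun i => (G k i * H i j)%R) = if Nat.eqb k j then 1%R else 0%R.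
Proof.
move=> /left_inv_mx [G HG].
exists (fun k i => G (inord k) (inord i)) => k j /ltP kl /ltP jl.
rewrite fsum_big.
apply: etrans (_ : _ = (1%:M : 'M[R]_(m.+1)) (inord k) (inord j)) _.
  rewrite -HG mxE.
  by apply: eq_bigr => l _; rewrite mxE inordK // inord_val.
rewrite mxE.
case: (PeanoNat.Nat.eqb_spec k j) => [->|ne]; first by rewrite eqxx.
case: eqP => // /(congr1 val); rewrite /= !inordK // => kj.

Qed.

Lemma left_inv' (N m : nat) (H : nat -> nat -> R) : (0 < N)%coq_nat -> (0 < m)%coq_nat ->
  full_col_rank N m H ->
  exists G : nat -> nat -> R, forall k j, (k < m)%coq_nat -> (j < m)%coq_nat ->
    fsum N (fun i => (G k i * H i j)%R) = if Nat.eqb k j then 1%R else 0%R.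
Proof.
case: N => [/ltP //|N]; case: m => [_ /ltP //|m] _ _. exact: left_inv.
Qed.
End MC.


Lemma abs_helper A B c : 0 < c -> A * A * (c * c) <= B -> Rabs A * c <= sqrt B.
Proof. intros Hc HB. assert (0 <= Rabs A * c) by (apply Rmult_le_pos; [apply Rabs_pos| lra]).
rewrite <- (sqrt_square (Rabs A * c)) by auto. apply sqrt_le_1_alt.
replace (Rabs A * c * (Rabs A * c)) with ((Rabs A * Rabs A) * (c * c)) by ring.
rewrite <- Rabs_mult, Rabs_right by (apply Rle_ge, sqnn). exact HB. Qed.

Theorem theorem6
  (N m : nat) (HN : (1 <= N)%nat) (Hm : (1 <= m)%nat)
  (H : nat -> nat -> R) (z : nat -> R)
  (Hunit : forall i, (i < N)%nat -> vnorm m (H i) = 1)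
  (Hcase3 : ~ in_col_space N m H z)
  (Hrank : full_col_rank N m H)
  (ystar : nat -> R)
  (Hls : forall y : nat -> R, resid2 N m H z ystar <= resid2 N m H z y)
  (E : nat -> nat -> bool)
  (Hbid : bidirectional N E) (Hconn : strongly_connected N E)
  (a : nat -> nat -> R)
  (Hsym : forall i j, (i < N)%nat -> (j < N)%nat -> a i j = a j i)
  (Hpos : forall i j, (i < N)%nat -> (j < N)%nat -> E j i = true -> 0 < a i j) :
  forall eps, 0 < eps ->
    exists Kstar, 0 < Kstar /\
      forall K, Kstar <= K ->
        forall x : R -> nat -> nat -> R,
          is_flow_solution N m H z E a K x ->
          exists xinf : nat -> nat -> R,
            (forall i k, (i < N)%nat -> (k < m)%nat ->
               lim_at_infty (fun t => x t i k) (xinf i k)) /\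
            (forall i, (i < N)%nat ->
               vnorm m (fun k => xinf i k - ystar k) <= eps).
Proof.
intros eps Heps.
assert (N0 : (0 < N)%nat) by lia.
assert (Ws : forall i j, (i < N)%nat -> (j < N)%nat -> W E a i j = W E a j i).
{ intros i j Hi Hj. unfold W. rewrite (Hbid j i) by auto. destruct (E i j); auto. }
assert (Wnn : forall i j, (i < N)%nat -> (j < N)%nat -> 0 <= W E a i j).
{ intros i j Hi Hj. unfold W. destruct (E j i) eqn:Ee; [left; apply Hpos; auto| lra]. }
assert (Wpos : forall j k, (j < N)%nat -> (k < N)%nat -> E j k = true -> 0 < W E a k j).
{ intros j k Hj Hk Ee. unfold W. rewrite Ee. apply Hpos; auto. }
assert (hn : forall i, (i < N)%nat -> dot m (H i) (H i) = 1).
{ intros i Hi. rewrite <- (sqrt_sqrt (dot m (H i) (H i))) by apply dot_nonneg.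
  unfold vnorm in Hunit. rewrite Hunit by auto. ring. }
destruct (D_le_Lap N m E a Wnn Wpos (fun i Hi => Hconn 0%nat i N0 Hi)) as [Cd [HCd HD]].
destruct (MC.left_inv' N m H ltac:(lia) ltac:(lia) Hrank) as [G HG].
destruct (coerc N m H G HG) as [beta [Hb0 [Hb1 Hbeta]]].
set (rho := fun i => z i - Hmul m H ystar i).
set (P := fsum N (fun i => rho i * rho i)).
assert (Pnn : 0 <= P) by (apply fsum_nonneg; intros; apply sqnn).
set (M := 2 * P * (/ beta + 1) / (eps * eps)).
assert (Mnn : 0 <= M).
{ unfold M. apply Rdiv_le_0_compat; [| nra]. assert (0 < / beta) by (apply Rinv_0_lt_compat; lra). nra. }
exists (2 * Cd * (2 + M)). split; [nra|].
intros K HK x Hx.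
set (alpha := K / (2 * Cd) - 1).
assert (Halpha : 1 + M <= alpha).
{ unfold alpha. apply Rmult_le_compat_r with (r := / (2 * Cd)) in HK; [| left; apply Rinv_0_lt_compat; lra].
  replace (2 * Cd * (2 + M) * / (2 * Cd)) with (2 + M) in HK by (field; lra). unfold Rdiv. lra. }
assert (Kpos : 0 < K) by nra.
assert (Energy : forall e, alpha * Dv N m e + beta / 2 * dot m (e 0%nat) (e 0%nat)
                   <= K / 2 * Lap N m E a e + HQ N m H e).
{ intros e. pose proof (HD e). pose proof (HQ_lower N m H e hn). pose proof (Hbeta (e 0%nat)).
  assert (K / 2 * Lap N m E a e >= (alpha + 1) * Dv N m e).
  { unfold alpha. replace (K / (2 * Cd) - 1 + 1) with (K / (2 * Cd)) by ring.
    apply Rle_ge. apply Rle_trans with (K / (2 * Cd) * (Cd * Lap N m E a e)).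
    - apply Rmult_le_compat_l; auto. apply Rdiv_le_0_compat; lra.
    - right. field. lra. }
  lra. }
set (w := fun s i k => flow_rhs N m H z E a K (x s) i k).
set (g := fun s => inner N m (w s) (w s)).
set (lam := beta / (8 * (INR N + 1))).
assert (INRpos : 0 <= INR N) by apply pos_INR.
assert (Hlam : 0 < lam) by (unfold lam; apply Rdiv_lt_0_compat; lra).
set (g' := fun s => 2 * inner N m (w s) (Lin N m H E a K (w s))).
assert (Hgd : forall s, 0 < s -> derivable_pt_lim g s (g' s)).
{ intros s Hs. unfold g, g'. apply d_inner. intros i k Hi Hk. unfold w. apply w_deriv; auto. }
assert (Dnn : forall e, 0 <= Dv N m e) by (intros; apply fsum_nonneg; intros; apply dot_nonneg).
assert (Hgb : forall s, 0 < s -> g' s <= - (2 * lam) * g s).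
{ intros s Hs. unfold g', g. rewrite inner_Lin by auto.
  pose proof (Energy (w s)). pose proof (inner_bound N m (w s)).
  pose proof (Dnn (w s)). pose proof (dot_nonneg m (w s 0%nat)).
  set (X := dot m (w s 0%nat) (w s 0%nat)) in *. set (D := Dv N m (w s)) in *.
  assert (E1 : beta / 2 * (X + D) <= K / 2 * Lap N m E a (w s) + HQ N m H (w s)).
  { assert (beta / 2 * D <= alpha * D) by (apply Rmult_le_compat_r; lra). lra. }
  assert (E2 : 2 * lam * inner N m (w s) (w s) <= beta / 2 * (X + D)).
  { apply Rle_trans with (2 * lam * (2 * (INR N + 1) * (X + D))).
    - apply Rmult_le_compat_l; [lra|]. nra.
    - right. unfold lam. field. lra. }
  assert (0 <= inner N m (w s) (w s)) by (apply fsum_nonneg; intros; apply dot_nonneg). nra. }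
set (G1 := g 1 * exp (2 * lam * 1)).
assert (Hgr := gronwall g g' lam Hgd Hgb).
assert (wb : forall i k, (i < N)%nat -> (k < m)%nat -> forall s, 1 <= s ->
   Rabs (w s i k) <= sqrt G1 * exp (- lam * s)).
{ intros i k Hi Hk s Hs.
  assert (Hsq : w s i k * w s i k <= g s).
  { unfold g, inner. eapply Rle_trans; [|apply (fsum_single N _ i)]; auto.
    - unfold dot. apply (fsum_single m (fun k0 => w s i k0 * w s i k0) k); auto. intros; apply sqnn.
    - intros; apply dot_nonneg. }
  assert (Hexp : exp (lam * s) * exp (lam * s) = exp (2 * lam * s)) by (rewrite <- exp_plus; f_equal; ring).
  pose proof (Hgr s Hs). fold G1 in H0.
  assert (Rabs (w s i k) * exp (lam * s) <= sqrt G1).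
  { apply abs_helper. apply exp_pos. rewrite Hexp. pose proof (exp_pos (2 * lam * s)). nra. }
  replace (- lam * s) with (- (lam * s)) by ring. rewrite exp_Ropp.
  pose proof (exp_pos (lam * s)).
  apply Rmult_le_reg_r with (r := exp (lam * s)); auto.
  rewrite Rmult_assoc, Rinv_l, Rmult_1_r by lra. exact H1. }
assert (G1nn : 0 <= sqrt G1) by apply sqrt_pos.
assert (Hex : forall i k, (i < N)%nat -> (k < m)%nat -> exists L, lim_at_infty (fun t => x t i k) L).
{ intros i k Hi Hk. apply (conv_deriv _ (fun s => w s i k) (sqrt G1) lam); [exact Hlam| exact G1nn| |].
  - intros s Hs. destruct Hx as [Hx1 _]. apply Hx1; auto. lra.
  - intros s Hs. apply wb; auto. }
set (xinf := fun i k => epsilon (inhabits 0) (fun L => lim_at_infty (fun t => x t i k) L)).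
assert (Hxinf : forall i k, (i < N)%nat -> (k < m)%nat -> lim_at_infty (fun t => x t i k) (xinf i k)).
{ intros i k Hi Hk. unfold xinf. apply epsilon_spec. auto. }
exists xinf. split; [exact Hxinf|].
assert (Heq : forall i k, (i < N)%nat -> (k < m)%nat -> flow_rhs N m H z E a K xinf i k = 0).
{ intros i k Hi Hk. apply (lim_unique (fun t => w t i k)).
  - unfold w. apply (lim_ext (fun t => Lin N m H E a K (x t) i k + z i * H i k)).
    { intros; symmetry; apply rhs_eq. }
    rewrite rhs_eq. unfold Lin, dot. apply lim_plus; [|apply lim_const].
    apply lim_minus.
    + apply lim_scal. apply (lim_fsum N (fun j t => W E a i j * (x t j k - x t i k))).
      intros j Hj. apply lim_scal. apply lim_minus; apply Hxinf; auto.
    + apply lim_scal. apply (lim_fsum m (fun l t => H i l * x t i l)).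
      intros l Hl. apply lim_scal. apply Hxinf; auto.
  - apply (lim_from_bound _ (sqrt G1) lam); auto. }
set (e := fun i k => xinf i k - ystar k).
assert (HLe : forall i k, (i < N)%nat -> (k < m)%nat -> Lin N m H E a K e i k = - rho i * H i k).
{ intros i k Hi Hk. pose proof (Heq i k Hi Hk). rewrite rhs_eq in H0. unfold Lin in *.
  unfold e at 3. rewrite dot_minus.
  rewrite (fsum_ext N (fun j => W E a i j * (e j k - e i k)) (fun j => W E a i j * (xinf j k - xinf i k))).
  - unfold rho, Hmul. lra.
  - intros j Hj. unfold e. f_equal. ring. }
assert (Hin : inner N m e (Lin N m H E a K e) = - fsum N (fun i => rho i * dot m (H i) (e i))).
{ replace (- fsum N (fun i => rho i * dot m (H i) (e i))) with (fsum N (fun i => (-1) * (rho i * dot m (H i) (e i)))) by (rewrite fsum_scal; ring).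
  unfold inner. apply fsum_ext; intros i Hi. unfold dot. rewrite <- fsum_scal, <- fsum_scal. apply fsum_ext; intros k Hk.
  rewrite HLe by auto. ring. }
rewrite inner_Lin in Hin by auto.
set (d := fun i k => e i k - e 0%nat k).
assert (HZ : fsum N (fun i => rho i * dot m (H i) (e i)) = fsum N (fun i => rho i * dot m (H i) (d i))).
{ rewrite (fsum_ext N _ (fun i => rho i * dot m (H i) (e 0%nat) + rho i * dot m (H i) (d i))).
  - rewrite fsum_plus. pose proof (normal_eq N m H z ystar Hls (e 0%nat)). change (fsum N (fun i => rho i * dot m (H i) (e 0%nat)) = 0) in H0.
    rewrite H0. ring.
  - intros i Hi. rewrite (dot_split m (H i) e i). unfold d; cbv beta; ring. }
assert (alpha_pos : 0 < alpha) by lra.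
assert (HZb : fsum N (fun i => rho i * dot m (H i) (d i)) <= P / (2 * alpha) + alpha / 2 * Dv N m e).
{ unfold P, Dv. fold d. unfold Rdiv at 1.
  rewrite Rmult_comm, <- fsum_scal, <- fsum_scal, <- fsum_plus. apply fsum_le; intros i Hi.
  pose proof (dot_CS m (H i) (d i)). rewrite hn in H0 by auto.
  set (b := dot m (H i) (d i)) in *. set (r := rho i).
  assert (r * b <= r * r / (2 * alpha) + alpha / 2 * (b * b)).
  { assert (0 <= (r - alpha * b) * (r - alpha * b) / (2 * alpha)) by (apply Rdiv_le_0_compat; [apply sqnn| lra]).
    assert ((r - alpha * b) * (r - alpha * b) / (2 * alpha) = r * r / (2 * alpha) + alpha / 2 * (b * b) - r * b) by (field; lra).
    lra. }
  assert (alpha / 2 * (b * b) <= alpha / 2 * dot m (d i) (d i)).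
  { apply Rmult_le_compat_l; [lra|]. lra. }
  change (dot m (fun k => e i k - e 0%nat k) (fun k => e i k - e 0%nat k)) with (dot m (d i) (d i)). unfold Rdiv in *. lra. }
pose proof (Energy e) as En.
set (X := dot m (e 0%nat) (e 0%nat)) in *. set (D := Dv N m e) in *.
assert (Xnn : 0 <= X) by apply dot_nonneg. assert (Dnn' : 0 <= D) by apply Dnn.
assert (Key : alpha / 2 * D + beta / 2 * X <= P / (2 * alpha)) by lra.
intros i Hi. unfold vnorm.
assert (Hei : dot m (fun k => xinf i k - ystar k) (fun k => xinf i k - ystar k) <= 2 * X + 2 * D).
{ change (fun k => xinf i k - ystar k) with (e i).
  apply Rle_trans with (2 * X + 2 * dot m (d i) (d i)).
  - unfold X, dot. rewrite <- !fsum_scal, <- fsum_plus. apply fsum_le; intros k Hk.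
    unfold d. pose proof (sqnn (e 0%nat k - (e i k - e 0%nat k))). nra.
  - assert (dot m (d i) (d i) <= D).
    { unfold D, Dv. apply (fsum_single N (fun i0 => dot m (fun k => e i0 k - e 0%nat k) (fun k => e i0 k - e 0%nat k)) i); auto.
      intros; apply dot_nonneg. }
    lra. }
assert (Hfin : 2 * X + 2 * D <= eps * eps).
{ assert (0 <= alpha * beta * X) by (apply Rmult_le_pos; [nra|lra]).
  assert (0 <= alpha * alpha * D) by (apply Rmult_le_pos; [nra|lra]).
  assert (A1 : alpha * alpha * D <= P) .
  { apply Rmult_le_compat_l with (r := 2 * alpha) in Key; [|lra].
    replace (2 * alpha * (P / (2 * alpha))) with P in Key by (field; lra). nra. }
  assert (A2 : alpha * beta * X <= P).
  { apply Rmult_le_compat_l with (r := 2 * alpha) in Key; [|lra].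
    replace (2 * alpha * (P / (2 * alpha))) with P in Key by (field; lra). nra. }
  assert (A3 : alpha * X <= P * / beta).
  { apply Rmult_le_reg_l with (r := beta); [lra|].
    replace (beta * (P * / beta)) with P by (field; lra). lra. }
  assert (A4 : alpha * D <= P).
  { assert (alpha * D <= alpha * alpha * D) by (assert (alpha * D * 1 <= alpha * D * alpha) by (apply Rmult_le_compat_l; nra); nra). lra. }
  assert (A5 : alpha * (2 * X + 2 * D) <= M * (eps * eps)).
  { unfold M. replace (2 * P * (/ beta + 1) / (eps * eps) * (eps * eps)) with (2 * P * (/ beta + 1)) by (field; lra).
    lra. }
  assert (A6 : M * (eps * eps) <= alpha * (eps * eps)) by (apply Rmult_le_compat_r; nra).
  assert (0 <= 2 * X + 2 * D) by lra.
  nra. }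
rewrite <- (sqrt_square eps) by lra. apply sqrt_le_1_alt. lra.
Qed.
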